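(* Let $\rho>1$, $k\ge1$ an integer and $\kappa\in(\kappa^c_\rho(k),1)$. Then there exists $(a_i)_{2\le i\le k+1}\in[0,1)^k$ such that, with $d_{k+1}=\mathcal D(a_2,\dots,a_{k+1})$, $$1<\kappa^{k+1}\frac{(1+\rho)^2}{4\rho}\sqrt{\prod_{2\le j\le k+1}(1-a_j^2)}<\kappa\frac{d_{k+1}}{2\rho}.$$
   Context: Set $r_1=r_{k+1}=1+\rho$, $r_i=2$ for $2\le i\le k$; for $(a_i)_{2\le i\le k+1}\in[0,1)^k$ let $d_1=1+\rho$ and $d_i^2=d_{i-1}^2+2r_ia_id_{i-1}+r_i^2$ ($2\le i\le k+1$, $d_i>0$), $\mathcal D(a_2,\dots,a_{k+1})=d_{k+1}$; $$\kappa^c_\rho(k)=\inf_{0\le a_2,\dots,a_{k+1}<1}\max\left(\left(\frac{4\rho}{(1+\rho)^2\sqrt{\prod_{2\le i\le k+1}(1-a_i^2)}}\right)^{\frac1{k+1}},\ \frac{2\rho}{\mathcal D(a_2,\dots,a_{k+1})}\right).$$ *)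

(* Defs.v *)
From HB Require Import structures.
From mathcomp Require Import all_boot all_order all_algebra.
From mathcomp Require Import all_classical all_reals all_analysis.
Set Implicit Arguments. Unset Strict Implicit. Unset Printing Implicit Defensive.
Import Order.TTheory GRing.Theory Num.Theory.
Local Open Scope ring_scope.
Local Open Scope classical_set_scope.

Section Kappa.
Variable R : realType.

Definition rr (rho : R) (k i : nat) : R :=
  if (i == 1%N) || (i == k.+1) then 1 + rho else 2.

(* d_1 = 1 + rho, d_i = sqrt(d_{i-1}^2 + 2 r_i a_i d_{i-1} + r_i^2) for i >= 2.
   (Index 0 is a dummy value.) The sequence a : nat -> R is used only at
   indices 2 .. k+1. *)
Fixpoint dd (rho : R) (k : nat) (a : nat -> R) (i : nat) : R :=
  match i with
  | 0%N => 1 + rho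
  | 1%N => 1 + rho
  | m.+1 => Num.sqrt (dd rho k a m ^+ 2 + 2 * rr rho k m.+1 * a m.+1 * dd rho k a m
                      + rr rho k m.+1 ^+ 2)
  end.

Definition DD (rho : R) (k : nat) (a : nat -> R) : R := dd rho k a k.+1.

Definition prodA (k : nat) (a : nat -> R) : R :=
  \prod_(2 <= i < k.+2) (1 - a i ^+ 2).

Definition admissible (k : nat) (a : nat -> R) : Prop :=
  forall i : nat, (2 <= i <= k.+1)%N -> 0 <= a i < 1.

Definition kappa_obj (rho : R) (k : nat) (a : nat -> R) : R :=
  Num.max (powR (4 * rho / ((1 + rho) ^+ 2 * Num.sqrt (prodA k a))) (k.+1%:R)^-1)
          (2 * rho / DD rho k a).

Definition kappa_c (rho : R) (k : nat) : R :=
  inf [set x | exists a : nat -> R, admissible k a /\ x = kappa_obj rho k a].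

End Kappa.

(* Main.v *)
Require Import Defs.
From HB Require Import structures.
From mathcomp Require Import all_boot all_order all_algebra.
From mathcomp Require Import all_classical all_reals all_analysis.
From mathcomp Require Import ring lra.
Import Order.TTheory GRing.Theory Num.Theory.
Local Open Scope ring_scope.

Lemma rr_gt0 (R : realType) (rho : R) k i : 0 < rho -> 0 < rr rho k i.
Proof. by move=> h; rewrite /rr; case: ifP => _; lra. Qed.

Lemma dd_S (R : realType) (rho : R) k (a : nat -> R) m :
  dd rho k a m.+2 = Num.sqrt (dd rho k a m.+1 ^+ 2 + 2 * rr rho k m.+2 * a m.+2 * dd rho k a m.+1
                      + rr rho k m.+2 ^+ 2).
Proof. by []. Qed.

Lemma dd_mono (R : realType) (rho : R) k (a a' : nat -> R) : 0 < rho ->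
  (forall j, (2 <= j <= k.+1)%N -> 0 <= a j <= a' j) ->
  forall i, (i <= k.+1)%N -> 0 < dd rho k a i <= dd rho k a' i.
Proof.
move=> rho0 ha; elim=> [|[|m] IH] hi; first (apply/andP; split => /=; lra).
  apply/andP; split => /=; lra.
rewrite !dd_S.
have /andP[d0 dd'] := IH (ltnW hi).
have /andP[a0 aa'] := ha m.+2 hi.
have r0 := @rr_gt0 R rho k m.+2 rho0.
set d := dd rho k a m.+1 in d0 dd' *; set d' := dd rho k a' m.+1 in dd' *.
set r := rr rho k m.+2 in r0 *.
apply/andP; split.
  rewrite sqrtr_gt0. have : 0 <= 2 * r * a m.+2 * d by rewrite !mulr_ge0 // ltW.
  have : 0 < d ^+ 2 by rewrite exprn_gt0.
  have : 0 <= r ^+ 2 by rewrite exprn_ge0 // ltW.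
  lra.
rewrite ler_sqrt; last first.
  have h1 : 0 <= a' m.+2 by lra.
  have h2 : 0 <= d' by lra.
  have : 0 <= 2 * r * a' m.+2 * d' by rewrite !mulr_ge0 // ltW.
  have : 0 <= d' ^+ 2 by rewrite exprn_ge0.
  have : 0 <= r ^+ 2 by rewrite exprn_ge0 // ltW.
  lra.
have : 2 * r * a m.+2 * d <= 2 * r * a' m.+2 * d'.
  rewrite -!mulrA ler_pM2l; last lra.
  rewrite ler_pM2l //. apply: ler_pM => //; lra.
nra.
Qed.

Theorem lemma2p10 (R : realType) (rho : R) (k : nat) (kappa : R) :
  1 < rho -> (1 <= k)%N -> kappa_c rho k < kappa -> kappa < 1 ->
  exists a : nat -> R, admissible k a /\
    1 < kappa ^+ k.+1 * ((1 + rho) ^+ 2 / (4 * rho)) * Num.sqrt (prodA k a) /\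
    kappa ^+ k.+1 * ((1 + rho) ^+ 2 / (4 * rho)) * Num.sqrt (prodA k a)
      < kappa * (DD rho k a / (2 * rho)).
Proof.
move=> rho1 k1 hk kap1.
have rho0 : 0 < rho by lra.
move: hk; rewrite /kappa_c => hk.
have [|y [a [adm ->]] ylt] := inf_lt _ hk.
  exists (kappa_obj rho k (fun=> 0)); exists (fun=> 0); split => //.
  by move=> i _; rewrite lexx ltr01.
move: ylt; rewrite /kappa_obj gt_max => /andP[hX hD].
set n := k.+1 in hX *.
set C := (1 + rho) ^+ 2 / (4 * rho).
have C0 : 0 < C by rewrite divr_gt0 // ?exprn_gt0; lra.
have a_pos : forall i, (2 <= i <= k.+1)%N -> 0 < 1 - a i ^+ 2.
  move=> i /adm /andP[h1 h2]; rewrite subr_gt0 expr2; nra.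
set Q := \prod_(3 <= i < k.+2) (1 - a i ^+ 2).
have Q0 : 0 < Q.
  rewrite /Q big_nat_cond; apply: prodr_gt0 => i /andP[/andP[h1 h2] _].
  by apply: a_pos; rewrite (ltnW h1) -ltnS.
have PQ : prodA k a = (1 - a 2 ^+ 2) * Q by rewrite /prodA big_ltn.
have a2 : 0 < 1 - a 2 ^+ 2 by apply: a_pos; rewrite /= ltnS.
have /andP[a20 a21] := adm 2%N (ltac:(by rewrite /= ltnS)).
have P0 : 0 < prodA k a by rewrite PQ mulr_gt0.
have sP0 : 0 < Num.sqrt (prodA k a) by rewrite sqrtr_gt0.
set X := 4 * rho / ((1 + rho) ^+ 2 * Num.sqrt (prodA k a)).
have X0 : 0 < X by rewrite divr_gt0 ?mulr_gt0 ?exprn_gt0 //; lra.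
have kap0 : 0 < kappa by exact: lt_trans (powR_gt0 _ X0) hX.
have Xn : X < kappa ^+ n.
  have -> : X = (X `^ n%:R^-1) ^+ n.
    rewrite -powR_mulrn ?powR_ge0 // -powRrM mulVf ?powRr1 ?pnatr_eq0 //.
    exact: ltW.
  by rewrite ltrXn2r // powR_ge0.
have XC : X * C * Num.sqrt (prodA k a) = 1.
  rewrite /X /C; field; rewrite !lt0r_neq0 //; lra.
set T0 := kappa ^+ n * C * Num.sqrt (prodA k a).
have T01 : 1 < T0 by rewrite -XC /T0 ltr_pM2r // ltr_pM2r.
have /andP[D0 _] := @dd_mono R rho k a a rho0
  (fun j hj => ltac:(by have /andP[h _] := adm j hj; rewrite h lexx)) k.+1 (leqnn _).
have B01 : 1 < kappa * (DD rho k a / (2 * rho)).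
  move: hD; rewrite /DD ltr_pdivrMr // => h.
  by rewrite mulrA ltr_pdivlMr ?mul1r 1?mulrC //; lra.
set B0 := kappa * (DD rho k a / (2 * rho)) in B01 *.
set v := (1 + Num.min T0 B0) / 2.
have [v1 vT vB] : [/\ 1 < v, v < T0 & v < B0].
  rewrite /v; case: (leP T0 B0) => h; split; lra.
set c := kappa ^+ n * C * Num.sqrt Q.
have sQ : 0 < Num.sqrt Q by rewrite sqrtr_gt0.
have kn : 0 < kappa ^+ n by rewrite exprn_gt0.
have c0 : 0 < c by apply: mulr_gt0 => //; apply: mulr_gt0.
have T0c : T0 = c * Num.sqrt (1 - a 2 ^+ 2).
  by rewrite /T0 /c PQ sqrtrM ?(ltW a2) //; ring.
set w := v / c.
have w0 : 0 < w by rewrite divr_gt0 //; lra.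
have wlt : w < Num.sqrt (1 - a 2 ^+ 2) by rewrite ltr_pdivrMr // mulrC -T0c.
have w2 : w ^+ 2 < 1 - a 2 ^+ 2.
  by rewrite -[1 - _](@sqr_sqrtr R) ?(ltW a2) // ltrXn2r // ltW.
set s := Num.sqrt (1 - w ^+ 2).
have a2sq : 0 <= a 2 ^+ 2 by rewrite exprn_ge0.
have w2p : 0 < w ^+ 2 by rewrite exprn_gt0.
have s2 : s ^+ 2 = 1 - w ^+ 2 by rewrite sqr_sqrtr //; lra.
have s0 : 0 <= s by exact: sqrtr_ge0.
have s1 : s < 1 by rewrite /s -[X in _ < X]sqrtr1 ltr_sqrt; lra.
have as2 : a 2 <= s.
  by rewrite -(ger0_norm a20) -sqrtr_sqr /s ler_sqrt; lra.
pose a' i := if i == 2%N then s else a i.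
have adm' : admissible k a'.
  by move=> i hi; rewrite /a'; case: eqP => _; [rewrite s0 s1 | exact: adm].
have PQ' : prodA k a' = w ^+ 2 * Q.
  rewrite /prodA big_ltn // /a' eqxx s2 (_ : 1 - (1 - w ^+ 2) = w ^+ 2); last lra.
  congr (_ * _); rewrite /Q big_nat_cond [RHS]big_nat_cond.
  by apply: eq_bigr => i /andP[/andP[h _] _]; case: eqP h => // ->.
have T' : kappa ^+ n * C * Num.sqrt (prodA k a') = v.
  rewrite PQ' sqrtrM ?exprn_ge0 ?(ltW w0) // sqrtr_sqr ger0_norm ?(ltW w0) //.
  rewrite /w /c; field; apply/and3P; split.
  - by apply/lt0r_neq0; rewrite sqrtr_gt0.
  - exact: lt0r_neq0.
  - by apply/lt0r_neq0; rewrite exprn_gt0.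
have /andP[_ DD'] := @dd_mono R rho k a a' rho0
  (fun j hj => ltac:(by have /andP[h _] := adm j hj; rewrite /a' h;
                     case: eqP => [->|_]; rewrite ?as2 ?lexx)) k.+1 (leqnn _).
exists a'; split => //; rewrite T'; split => //.
apply: (lt_le_trans vB); rewrite /B0 ler_pM2l // ler_pM2r //.
by rewrite invr_gt0; lra.
Qed.
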